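(* There exist a wGKAT automaton $(Y,\gamma)$ and a homomorphism $h:(\mathrm{Exp},\partial)\to(Y,\gamma)$ whose kernel $\{(e,f): h(e)=h(f)\}$ is exactly the relation $\equiv$; concretely, there is a transition map $\partial_\equiv$ on $\mathrm{Exp}/{\equiv}$ making the quotient map $[-]_\equiv$ a homomorphism from $(\mathrm{Exp},\partial)$ to $(\mathrm{Exp}/{\equiv},\partial_\equiv)$.
   Context: Fix a finite set $T$ of primitive tests, a set $\mathrm{Act}$ of atomic actions, a set $\mathrm{Out}$ of return values, and a semiring $(S,+,\cdot,0,1)$ that is positive ($x+y=0\Rightarrow x=y=0$), refinement (whenever $x+y=z+w$ there exist $s,t,u,v$ with $s+t=x$, $s+u=z$, $u+v=y$, $t+v=w$) and Conway (with ${}^*:S\to S$ satisfying $(a+b)^*=a^*(ba^* )^*$, $(ab)^*=1+a(ba)^*b$). Tests: $b,c\in\mathrm{BExp}::=\mathtt{0}\mid\mathtt{1}\mid t\ (t\in T)\mid\bar b\mid b+c\mid bc$ ($\mathtt 0,\mathtt 1$ false/true, distinct from semiring $0,1$); $\equiv_{BA}$ is Boolean equivalence; $\mathrm{At}$ is the finite set of atoms of the free Boolean algebra on $T$, atoms also regarded as tests; $\alpha\le b$ means $\alpha$ entails $b$. Expressions: $e,f\in\mathrm{Exp}::= p\in\mathrm{Act}\mid b\in\mathrm{BExp}\mid e+_b f\mid e;f\mid e^{(b)}\mid v\in\mathrm{Out}\mid e\oplus_{r,s} f\ (r,s\in S)$; $\odot r:=\mathtt 1\oplus_{r,0}\mathtt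 0$. $\mathcal M_\omega(X)$: finitely supported maps $X\to S$, pointwise operations; $\delta_x$ indicator of $x$; $\nu[A]=\sum_{x\in A}\nu(x)$. A wGKAT automaton is $(X,\beta)$ with $\beta:X\to\mathcal M_\omega(\{\mathsf{acc},\mathsf{rej}\}+\mathrm{Out}+\mathrm{Act}\times X)^{\mathrm{At}}$. A map $h:X\to Y$ between automata $(X,\beta),(Y,\gamma)$ is a homomorphism if for all $x,\alpha$: $\gamma(h(x))_\alpha(o)=\beta(x)_\alpha(o)$ for $o\in\{\mathsf{acc},\mathsf{rej}\}+\mathrm{Out}$, and $\gamma(h(x))_\alpha(p,y)=\beta(x)_\alpha[\{p\}\times h^{-1}(y)]$. The derivative automaton $(\mathrm{Exp},\partial)$: $\partial(b)_\alpha=\delta_{\mathsf{acc}}$ if $\alpha\le b$, else $\delta_{\mathsf{rej}}$; $\partial(v)_\alpha=\delta_v$; $\partial(p)_\alpha=\delta_{(p,\mathtt 1)}$; $\partial(e+_bf)_\alpha=\partial(e)_\alpha$ if $\alpha\le b$, else $\partial(f)_\alpha$; $\partial(e\oplus_{r,s}f)_\alpha=r\partial(e)_\alpha+s\partial(f)_\alpha$; $\partial(e;f)_\alpha=\sum_x\partial(e)_\alpha(x)c_{\alpha,f}(x)$ with $c_{\alpha,f}(\mathsf{acc})=\partial(f)_\alpha$, $c_{\alpha,f}(x)=\delta_x$ for $x\in\{\mathsf{rej}\}\cup\mathrm{Out}$, $c_{\alpha,f}(p,e')=\delta_{(p,e';f)}$; $\partial(e^{(b)})_\alpha(x)$ is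 $1$ if $x=\mathsf{acc}$ and $\alpha\le\bar b$; $\partial(e)_\alpha(\mathsf{acc})^*\partial(e)_\alpha(x)$ if $x\in\{\mathsf{rej}\}\cup\mathrm{Out}$ and $\alpha\le b$; $\partial(e)_\alpha(\mathsf{acc})^*\partial(e)_\alpha(p,e')$ if $x=(p,e';e^{(b)})$ and $\alpha\le b$; $0$ otherwise. $E:\mathrm{Exp}\to S^{\mathrm{At}}$: $E(p)_\alpha=E(v)_\alpha=0$; $E(b)_\alpha=1$ if $\alpha\le b$ else $0$; $E(e\oplus_{r,s}f)_\alpha=rE(e)_\alpha+sE(f)_\alpha$; $E(e+_bf)_\alpha=E(e)_\alpha$ if $\alpha\le b$ else $E(f)_\alpha$; $E(e;f)_\alpha=E(e)_\alpha E(f)_\alpha$; $E(e^{(b)})_\alpha=E(\bar b)_\alpha$. The relation $\equiv$ is the smallest congruence on $\mathrm{Exp}$ (tests taken up to $\equiv_{BA}$; sequencing binds tighter than $\oplus$, $\odot$ binds tightest) containing, for all $e,f,g\in\mathrm{Exp}$, tests $b,c$, $v\in\mathrm{Out}$, $r,s,t,u\in S$: (G1) $e+_be\equiv e$; (G2) $e+_bf\equiv b;e+_bf$; (G3) $e+_bf\equiv f+_{\bar b}e$; (G4) $(e+_bf)+_cg\equiv e+_{bc}(f+_cg)$; (D1) $e\oplus_{r,s}(f+_bg)\equiv(e\oplus_{r,s}f)+_b(e\oplus_{r,s}g)$; (D2) $e\oplus_{r,s}(f\oplus_{t,u}g)\equiv e\oplus_{r,1}(f\oplus_{st,su}g)$;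 (D3) $b;(e\oplus_{r,s}f)\equiv b;(b;e\oplus_{r,s}b;f)$; (S1) $\mathtt 1;e\equiv e\equiv e;\mathtt 1$; (S2) $(e;f);g\equiv e;(f;g)$; (S3) $\mathtt 0;e\equiv\mathtt 0$; (S4) $(e\oplus_{r,s}f);g\equiv e;g\oplus_{r,s}f;g$; (S5) $(e+_bf);g\equiv e;g+_bf;g$; (S6) $v;e\equiv v$; (S7) $b;c\equiv bc$; (L1) $e^{(b)}\equiv e;e^{(b)}+_b\mathtt 1$; (C1) $\odot1\equiv\mathtt 1$; (C2) $\odot0;e\equiv\odot0$; (W1) $e\oplus_{r,s}e\equiv\odot(r+s);e$; (W2) $e\oplus_{r,s}f\equiv f\oplus_{s,r}e$; (W3) $e\oplus_{r,s}(f\oplus_{t,u}g)\equiv(e\oplus_{r,st}f)\oplus_{1,su}g$; (W4) $e\oplus_{ru,s}f\equiv(\odot u;e)\oplus_{r,s}f$; and closed under the rules (L2) if $e\equiv(f\oplus_{r,s}\mathtt 1)+_cg$ then $c;e^{(b)}\equiv c;((\odot(s^*r);f;e^{(b)})+_b\mathtt 1)$; (F1) if $g\equiv e;g+_bf$ and $E(e)_\alpha=0$ for all $\alpha\in\mathrm{At}$ then $g\equiv e^{(b)};f$. *)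

(* Defs.v *)
From HB Require Import structures.
From mathcomp Require Import all_boot all_order all_algebra.
From mathcomp Require Import boolp.
From Stdlib Require List.
Set Implicit Arguments. Unset Strict Implicit. Unset Printing Implicit Defensive.
Import GRing.Theory.
Local Open Scope ring_scope.

Section Tests.
Variable T : finType.

Inductive BExp : Type :=
| BZero | BOne | BPrim (t : T) | BNeg (b : BExp) | BOr (b c : BExp) | BAnd (b c : BExp).

(* Atoms of the free Boolean algebra on T = valuations T -> bool. *)
Definition At : Type := {ffun T -> bool}.

(* beval b a = true  <->  the atom a entails b  (a <= b). *)
Fixpoint beval (b : BExp) (a : At) : bool :=
  match b with
  | BZero => false
  | BOne => true
  | BPrim t => a t
  | BNeg b => ~~ beval b a
  | BOr b c => beval b a || beval c a
  | BAnd b c => beval b a && beval c a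
  end.

Definition ba_eq (b c : BExp) : Prop := forall a : At, beval b a = beval c a.
End Tests.
Arguments BZero {T}. Arguments BOne {T}.

Section Exprs.
Variables (T : finType) (Act Out : Type) (S : pzSemiRingType).

Inductive Exp : Type :=
| EAct (p : Act)
| ETest (b : BExp T)
| EIf (e f : Exp) (b : BExp T)
| ESeq (e f : Exp)
| ELoop (e : Exp) (b : BExp T)
| ERet (v : Out)
| EPlus (e f : Exp) (r s : S).

Definition odot (r : S) : Exp := EPlus (ETest BOne) (ETest BZero) r 0.

Inductive Ev (X : Type) : Type :=
| Acc | Rej | Ret (v : Out) | Tr (p : Act) (x : X).

Arguments Acc {X}. Arguments Rej {X}. Arguments Ret {X} v. Arguments Tr {X} p x.

Definition fin_supp (X : Type) (f : X -> S) : Prop :=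
  exists s : seq X, forall x, f x <> 0 -> List.In x s.

Definition massP (X : Type) (f : X -> S) (A : X -> Prop) (m : S) : Prop :=
  exists s : seq X, List.NoDup s /\ (forall x, f x <> 0 -> List.In x s) /\
    m = \sum_(x <- s) (if `[< A x >] then f x else 0).

Definition is_automaton (X : Type) (beta : X -> At T -> Ev X -> S) : Prop :=
  forall x a, fin_supp (beta x a).

Definition is_hom (X Y : Type) (beta : X -> At T -> Ev X -> S)
    (gamma : Y -> At T -> Ev Y -> S) (h : X -> Y) : Prop :=
  forall (x : X) (a : At T),
    gamma (h x) a Acc = beta x a Acc /\
    gamma (h x) a Rej = beta x a Rej /\
    (forall v, gamma (h x) a (Ret v) = beta x a (Ret v)) /\
    (forall p (y : Y),
       massP (beta x a) (fun o => exists x', o = Tr p x' /\ h x' = y)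
             (gamma (h x) a (Tr p y))).

Variable star : S -> S.

Definition ind (o o' : Ev Exp) : S := if `[< o = o' >] then 1 else 0.

Fixpoint wderiv (e : Exp) (a : At T) (o : Ev Exp) {struct e} : S :=
  match e with
  | ETest b => if beval b a then ind Acc o else ind Rej o
  | ERet v => ind (Ret v) o
  | EAct p => ind (Tr p (ETest BOne)) o
  | EIf e f b => if beval b a then wderiv e a o else wderiv f a o
  | EPlus e f r s => r * wderiv e a o + s * wderiv f a o
  | ESeq e f =>
      (* sum_x wderiv e a x * c_{a,f}(x)(o) *)
      wderiv e a Acc * wderiv f a o +
      match o with
      | Acc => 0
      | Rej => wderiv e a Rej
      | Ret v => wderiv e a (Ret v)
      | Tr p g =>
          match g with
          | ESeq e' f' => if `[< f' = f >] then wderiv e a (Tr p e') else 0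
          | _ => 0
          end
      end
  | ELoop e b =>
      match o with
      | Acc => if beval b a then 0 else 1
      | Rej => if beval b a then star (wderiv e a Acc) * wderiv e a Rej else 0
      | Ret v => if beval b a then star (wderiv e a Acc) * wderiv e a (Ret v) else 0
      | Tr p g =>
          if beval b a then
            match g with
            | ESeq e' f' =>
                if `[< f' = ELoop e b >]
                then star (wderiv e a Acc) * wderiv e a (Tr p e') else 0
            | _ => 0
            end
          else 0
      end
  end.

Fixpoint Eterm (e : Exp) (a : At T) : S :=
  match e with
  | EAct _ => 0
  | ERet _ => 0
  | ETest b => if beval b a then 1 else 0
  | EPlus e f r s => r * Eterm e a + s * Eterm f a
  | EIf e f b => if beval b a then Eterm e a else Eterm f a
  | ESeq e f => Eterm e a * Eterm f a
  | ELoop e b => if beval b a then 0 else 1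
  end.

Local Notation "e ;; f" := (ESeq e f) (at level 40, left associativity).
Local Notation one := (ETest BOne).

Inductive wequiv : Exp -> Exp -> Prop :=
| eq_refl e : wequiv e e
| eq_sym e f : wequiv e f -> wequiv f e
| eq_trans e f g : wequiv e f -> wequiv f g -> wequiv e g
| eq_test b c : ba_eq b c -> wequiv (ETest b) (ETest c)
| eq_if e e' f f' b b' : wequiv e e' -> wequiv f f' -> ba_eq b b' ->
    wequiv (EIf e f b) (EIf e' f' b')
| eq_seq e e' f f' : wequiv e e' -> wequiv f f' -> wequiv (e ;; f) (e' ;; f')
| eq_loop e e' b b' : wequiv e e' -> ba_eq b b' -> wequiv (ELoop e b) (ELoop e' b')
| eq_plus e e' f f' r s : wequiv e e' -> wequiv f f' ->
    wequiv (EPlus e f r s) (EPlus e' f' r s)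
| ax_G1 e b : wequiv (EIf e e b) e
| ax_G2 e f b : wequiv (EIf e f b) (EIf (ETest b ;; e) f b)
| ax_G3 e f b : wequiv (EIf e f b) (EIf f e (BNeg b))
| ax_G4 e f g b c : wequiv (EIf (EIf e f b) g c) (EIf e (EIf f g c) (BAnd b c))
| ax_D1 e f g b r s :
    wequiv (EPlus e (EIf f g b) r s) (EIf (EPlus e f r s) (EPlus e g r s) b)
| ax_D2 e f g r s t u :
    wequiv (EPlus e (EPlus f g t u) r s) (EPlus e (EPlus f g (s * t) (s * u)) r 1)
| ax_D3 b e f r s :
    wequiv (ETest b ;; EPlus e f r s) (ETest b ;; EPlus (ETest b ;; e) (ETest b ;; f) r s)
| ax_S1l e : wequiv (one ;; e) e
| ax_S1r e : wequiv e (e ;; one)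
| ax_S2 e f g : wequiv ((e ;; f) ;; g) (e ;; (f ;; g))
| ax_S3 e : wequiv (ETest BZero ;; e) (ETest BZero)
| ax_S4 e f g r s : wequiv (EPlus e f r s ;; g) (EPlus (e ;; g) (f ;; g) r s)
| ax_S5 e f g b : wequiv (EIf e f b ;; g) (EIf (e ;; g) (f ;; g) b)
| ax_S6 v e : wequiv (ERet v ;; e) (ERet v)
| ax_S7 b c : wequiv (ETest b ;; ETest c) (ETest (BAnd b c))
| ax_L1 e b : wequiv (ELoop e b) (EIf (e ;; ELoop e b) one b)
| ax_C1 : wequiv (odot 1) one
| ax_C2 e : wequiv (odot 0 ;; e) (odot 0)
| ax_W1 e r s : wequiv (EPlus e e r s) (odot (r + s) ;; e)
| ax_W2 e f r s : wequiv (EPlus e f r s) (EPlus f e s r)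
| ax_W3 e f g r s t u :
    wequiv (EPlus e (EPlus f g t u) r s) (EPlus (EPlus e f r (s * t)) g 1 (s * u))
| ax_W4 e f r s u : wequiv (EPlus e f (r * u) s) (EPlus (odot u ;; e) f r s)
| rule_L2 e f g b c r s :
    wequiv e (EIf (EPlus f one r s) g c) ->
    wequiv (ETest c ;; ELoop e b)
          (ETest c ;; EIf (odot (star s * r) ;; (f ;; ELoop e b)) one b)
| rule_F1 e f g b :
    wequiv g (EIf (e ;; g) f b) -> (forall a, Eterm e a = 0) ->
    wequiv g (ELoop e b ;; f).

End Exprs.
Arguments Acc {Act Out X}. Arguments Rej {Act Out X}.

(* Main.v *)
Require Import Defs.
From mathcomp Require Import all_boot all_order all_algebra boolp.
From Stdlib Require List ClassicalEpsilon.
Import GRing.Theory.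
Local Open Scope ring_scope.
Set Implicit Arguments. Unset Strict Implicit. Unset Printing Implicit Defensive.

Section Sound.
Variables (T : finType) (Act Out : Type) (S : pzSemiRingType) (star : S -> S).
Hypothesis S_conway_sum : forall a b : S, star (a + b) = star a * star (b * star a).
Hypothesis S_conway_prod : forall a b : S, star (a * b) = 1 + a * star (b * a) * b.

Local Notation Exp := (Exp T Act Out S).
Local Notation Ev := (Ev Act Out Exp).
Local Notation At := (At T).
Local Notation wd := (@wderiv T Act Out S star).
Local Notation weq := (@wequiv T Act Out S star).
Local Notation one := (@ETest T Act Out S (@BOne T)).
Local Notation TR p g := (@Tr Act Out Exp p g).
Local Notation RET v := (@Ret Act Out Exp v).
Local Notation ERET v := (@ERet T Act Out S v).
Local Notation EACT q := (@EAct T Act Out S q).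
Local Notation ETEST b := (@ETest T Act Out S b).
Local Notation zero := (@ETest T Act Out S (@BZero T)).

Lemma star_unfold (a : S) : star a = 1 + a * star a.
Proof. by have := S_conway_prod a 1; rewrite mulr1 mul1r mulr1. Qed.

Lemma star0 : star 0 = 1.
Proof. by rewrite star_unfold mul0r addr0. Qed.

Lemma asb_eq (P Q : Prop) : (P <-> Q) -> `[< P >] = `[< Q >].
Proof. by move=> H; rewrite (propext H). Qed.

Lemma ind_same (o : Ev) : ind o o = 1.
Proof. by rewrite /ind asboolT. Qed.
Lemma ind_diff (o o' : Ev) : o <> o' -> ind o o' = 0.
Proof. by move=> H; rewrite /ind asboolF. Qed.

Lemma dAcc (e : Exp) a : wd e a Acc = Eterm e a.
Proof.
elim: e => [p|b|e IHe f IHf b|e IHe f IHf|e IHe b|v|e IHe f IHf r s] /=.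
- by rewrite ind_diff.
- by case: (beval b a); rewrite ?ind_same ?ind_diff.
- by case: (beval b a).
- by rewrite IHe IHf addr0.
- by [].
- by rewrite ind_diff.
- by rewrite IHe IHf.
Qed.

Fixpoint trs (e : Exp) (a : At) : seq ((Act * Exp) * S) :=
  match e with
  | EAct q => [:: ((q, one), 1)]
  | ETest _ => [::]
  | ERet _ => [::]
  | EIf e f b => if beval b a then trs e a else trs f a
  | EPlus e f r s => map (fun t => (t.1, r * t.2)) (trs e a) ++ map (fun t => (t.1, s * t.2)) (trs f a)
  | ESeq e f => map (fun t => (t.1, Eterm e a * t.2)) (trs f a) ++
                map (fun t => ((t.1.1, ESeq t.1.2 f), t.2)) (trs e a)
  | ELoop e b => if beval b a then
       map (fun t => ((t.1.1, ESeq t.1.2 (ELoop e b)), star (Eterm e a) * t.2)) (trs e a)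
       else [::]
  end.

Lemma sum_scale (X : Type) (l : seq X) (Q : X -> bool) (w : X -> S) (r : S) :
  \sum_(t <- l) (if Q t then r * w t else 0) = r * \sum_(t <- l) (if Q t then w t else 0).
Proof.
elim: l => [|x l IH]; first by rewrite !big_nil mulr0.
by rewrite !big_cons IH mulrDr; case: (Q x); rewrite ?mulr0 ?add0r.
Qed.

Lemma sum_zero (X : Type) (l : seq X) (F : X -> S) :
  (forall x, F x = 0) -> \sum_(t <- l) F t = 0.
Proof. by move=> H; elim: l => [|x l IH]; rewrite ?big_nil // big_cons IH H addr0. Qed.

Lemma sum_ext (X : Type) (l : seq X) (F G : X -> S) :
  (forall x, F x = G x) -> \sum_(t <- l) F t = \sum_(t <- l) G t.
Proof. by move=> H; elim: l => [|x l IH]; rewrite ?big_nil // !big_cons IH H. Qed.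

Lemma T1 (e : Exp) a p g :
  wd e a (TR p g) = \sum_(t <- trs e a) (if `[< t.1.1 = p /\ t.1.2 = g >] then t.2 else 0).
Proof.
elim: e a p g => [q|b|e IHe f IHf b|e IHe f IHf|e IHe b|v|e IHe f IHf r s] a p g /=.
- rewrite big_seq1 /ind /=; congr (if _ then _ else _); apply: asb_eq; split.
    by case=> -> ->. by case=> -> ->.
- by rewrite big_nil; case: (beval b a); rewrite ind_diff.
- by case: (beval b a).
- rewrite big_cat !big_map /= sum_scale dAcc -IHf; congr (_ + _).
  case: g => [q|c|e1 f1 c|e' f'|e1 c|v|e1 f1 r s] /=; try (by rewrite sum_zero // => t; rewrite asboolF //; case=> _ H).
  case: (asboolP (f' = f)) => [->|Hf].
    by rewrite IHe; apply: sum_ext => t; congr (if _ then _ else _); apply: asb_eq; split; case=> H1 H2; split=> //; congruence.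
  by rewrite sum_zero // => t; rewrite asboolF //; case=> _ H; apply: Hf; congruence.
- case: (beval b a); last by rewrite big_nil.
  rewrite big_map /= sum_scale dAcc.
  case: g => [q|c|e1 f1 c|e' f'|e1 c|v|e1 f1 r s] /=; try (by rewrite sum_zero ?mulr0 // => t; rewrite asboolF //; case=> _ H).
  case: (asboolP (f' = ELoop e b)) => [->|Hf].
    by rewrite IHe; congr (_ * _); apply: sum_ext => t; congr (if _ then _ else _); apply: asb_eq; split; case=> H1 H2; split=> //; congruence.
  by rewrite sum_zero ?mulr0 // => t; rewrite asboolF //; case=> _ H; apply: Hf; congruence.
- by rewrite big_nil ind_diff.
- by rewrite big_cat !big_map /= !sum_scale IHe IHf.
Qed.


Definition MT (e : Exp) a p (P : Exp -> Prop) :=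
  \sum_(t <- trs e a) (if `[< t.1.1 = p /\ P t.1.2 >] then t.2 else 0).

Inductive comp := CA | CR | CV (v : Out) | CM (p : Act) (P : Exp -> Prop) | CZ.

Definition val (c : comp) (e : Exp) (a : At) : S :=
  match c with
  | CA => Eterm e a
  | CR => wd e a Rej
  | CV v => wd e a (RET v)
  | CM p P => MT e a p P
  | CZ => 0
  end.

Definition baseT (c : comp) (t : bool) : S :=
  match c with
  | CA => if t then 1 else 0
  | CR => if t then 0 else 1
  | _ => 0
  end.

Definition cmap (c : comp) (F : Exp -> Exp) : comp :=
  match c with
  | CA => CZ
  | CM p P => CM p (fun x => P (F x))
  | c' => c'
  end.

Definition sat (P : Exp -> Prop) := forall x y, weq x y -> P x -> P y.
Definition satc (c : comp) := match c with CM _ P => sat P | _ => True end.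

Lemma val_test c b a : val c (ETEST b) a = baseT c (beval b a).
Proof.
case: c => [||v|p P|] /=; case: (beval b a); rewrite ?ind_same ?ind_diff //.
all: by rewrite /MT big_nil.
Qed.

Lemma val_act c q a : val c (EACT q) a =
  match c with CM p P => if `[< q = p /\ P one >] then 1 else 0 | _ => 0 end.
Proof.
case: c => [||w|p P|] /=; rewrite ?ind_diff //.
by rewrite /MT big_seq1.
Qed.

Lemma val_ret c v a : val c (ERET v) a =
  match c with CV w => if `[< v = w >] then 1 else 0 | _ => 0 end.
Proof.
case: c => [||w|p P|] /=; try done; try by rewrite ind_diff.
- by rewrite /ind; congr (if _ then _ else _); apply: asb_eq; split; congruence.
- by rewrite /MT big_nil.
Qed.

Lemma val_if c e f b a : val c (EIf e f b) a = if beval b a then val c e a else val c f a.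
Proof. by case: c => [||w|p P|] /=; rewrite ?/MT /=; case: (beval b a). Qed.

Lemma val_plus c e f r s a : val c (EPlus e f r s) a = r * val c e a + s * val c f a.
Proof.
case: c => [||w|p P|] /=; rewrite ?mulr0 ?addr0 //.
by rewrite /MT /= big_cat !big_map /= !sum_scale.
Qed.

Lemma val_seq c e f a :
  val c (ESeq e f) a = Eterm e a * val c f a + val (cmap c (fun x => ESeq x f)) e a.
Proof.
case: c => [||w|p P|] /=; rewrite ?mulr0 ?addr0 ?dAcc //.
by rewrite /MT /= big_cat !big_map /= !sum_scale.
Qed.

Lemma val_loop c e b a :
  val c (ELoop e b) a = if beval b a then star (Eterm e a) * val (cmap c (fun x => ESeq x (ELoop e b))) e a
                        else baseT c true.
Proof.
by case: c => [||w|p P|] /=; rewrite ?/MT /=; case: (beval b a); rewrite ?mulr0 ?dAcc ?big_nil ?big_map /= ?sum_scale.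
Qed.

Lemma MT_ext e a p (P Q : Exp -> Prop) : (forall x, P x <-> Q x) -> MT e a p P = MT e a p Q.
Proof.
move=> H; rewrite /MT; apply: sum_ext => t; congr (if _ then _ else _); apply: asb_eq.
by split; case=> H1 H2; split => //; apply/H.
Qed.

Lemma satc_cmap c F : satc c -> (forall x y, weq x y -> weq (F x) (F y)) -> satc (cmap c F).
Proof. by case: c => //= p P HP HF x y /HF; apply: HP. Qed.

Lemma cmap_ext c F G e a : satc c -> (forall x, weq (F x) (G x)) ->
  val (cmap c F) e a = val (cmap c G) e a.
Proof.
case: c => //= p P HP H; apply: MT_ext => x; split; apply: HP; [exact: H | exact: Defs.eq_sym (H x)].
Qed.

Lemma cmap_cmap c F G : cmap (cmap c F) G = cmap c (fun x => F (G x)).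
Proof. by case: c. Qed.

Lemma baseT_cmap c F t : baseT (cmap c F) t = if t then 0 else baseT c false.
Proof. by case: c => //= *; case: t. Qed.

Definition Bis (e f : Exp) := forall c a, satc c -> val c e a = val c f a.


Lemma L2alg (r s F X : S) :
  star (r*F + s) * (r*X) = star s * r * (F * (star (r*F+s) * (r*X)) + X).
Proof.
have E1 : star (r*F+s) = star s * star (r*F*star s) by rewrite addrC S_conway_sum.
have K : star (r*F + s) = star s + star s * (r*F) * star (r*F+s).
  by rewrite E1 {1}(star_unfold (r*F*star s)) mulrDr mulr1 !mulrA.
rewrite {1}K mulrDl mulrDr !mulrA addrC.
done.
Qed.

Lemma val_one c a : val c one a = baseT c true.
Proof. by rewrite val_test. Qed.

Lemma BisA e f a : Bis e f -> Eterm e a = Eterm f a.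
Proof. by move=> H; exact: (H CA a I). Qed.

Lemma sound (e f : Exp) : weq e f -> Bis e f.
Proof.
elim => {e f}.
- by [].
- by move=> e f _ IH c a Hc; rewrite IH.
- by move=> e f g _ IH1 _ IH2 c a Hc; rewrite IH1 // IH2.
- by move=> b b' H c a Hc; rewrite !val_test H.
- by move=> e e' f f' b b' _ IH1 _ IH2 Hb c a Hc; rewrite !val_if Hb (IH1 c a Hc) (IH2 c a Hc).
- move=> e e' f f' H1 IH1 H2 IH2 c a Hc.
  rewrite !val_seq (BisA a IH1) (IH2 c a Hc).
  rewrite (IH1 _ a (satc_cmap Hc (fun x y h => eq_seq h (Defs.eq_refl _ f)))).
  by rewrite (cmap_ext _ _ Hc (fun x => eq_seq (Defs.eq_refl _ x) H2)).
- move=> e e' b b' H IH Hb c a Hc.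
  rewrite !val_loop Hb (BisA a IH).
  rewrite (IH _ a (satc_cmap Hc (fun x y h => eq_seq h (Defs.eq_refl _ _)))).
  by rewrite (cmap_ext _ _ Hc (fun x => eq_seq (Defs.eq_refl _ x) (eq_loop H Hb))).
- by move=> e e' f f' r s _ IH1 _ IH2 c a Hc; rewrite !val_plus (IH1 c a Hc) (IH2 c a Hc).
- by move=> e b c a Hc; rewrite val_if; case: (beval b a).
- move=> e f b c a Hc; rewrite !val_if val_seq val_test baseT_cmap /=.
  by case: (beval b a); rewrite ?mul1r ?addr0.
- by move=> e f b c a Hc; rewrite !val_if /=; case: (beval b a).
- by move=> e f g b b' c a Hc; rewrite !val_if /=; case: (beval b a); case: (beval b' a).
- by move=> e f g b r s c a Hc; rewrite val_plus !val_if !val_plus; case: (beval b a).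
- move=> e f g r s t u c a Hc; rewrite !val_plus.
  by rewrite !mulrDr !mulrA mul1r.
- move=> b e f r s c a Hc; rewrite !val_seq !val_plus !val_seq !val_test !baseT_cmap /=.
  by case: (beval b a); rewrite ?mul1r ?addr0 ?mul0r ?add0r.
- by move=> e c a Hc; rewrite val_seq val_test baseT_cmap /= mul1r addr0.
- move=> e c a Hc; rewrite val_seq val_test.
  case: c Hc => [||w|p P|] //= Hc; rewrite ?mulr1 ?mulr0 ?addr0 ?add0r //.
  apply: MT_ext => x; split; apply: Hc; [exact: ax_S1r | exact: Defs.eq_sym (ax_S1r _ _)].
- move=> e f g c a Hc; rewrite !val_seq /= cmap_cmap.
  rewrite (cmap_ext _ _ Hc (fun x => ax_S2 _ x f g)).
  by rewrite mulrDr !mulrA addrA.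
- by move=> e c a Hc; rewrite val_seq !val_test baseT_cmap /= mul0r add0r.
- move=> e f g r s c a Hc; rewrite val_seq !val_plus !val_seq /=.
  by rewrite mulrDl !mulrDr !mulrA addrACA.
- by move=> e f g b c a Hc; rewrite val_seq !val_if !val_seq /=; case: (beval b a).
- move=> v e c a Hc; rewrite val_seq /= mul0r add0r !val_ret.
  by case: c Hc.
- move=> b b' c a Hc; rewrite val_seq !val_test baseT_cmap /=.
  by case: (beval b a); case: (beval b' a); rewrite ?mul1r ?mul0r ?addr0 ?add0r.
- move=> e b c a Hc; rewrite val_if val_seq val_test !val_loop /=.
  case: (beval b a); rewrite ?addr0 //.
  by rewrite {1}star_unfold mulrDl mul1r mulrA addrC.
- by move=> c a Hc; rewrite /odot val_plus !val_test /= mul1r mul0r addr0.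
- move=> e c a Hc; rewrite /odot val_seq !val_plus !val_test !baseT_cmap /=.
  by rewrite !mul0r !addr0 mul0r.
- move=> e r s c a Hc; rewrite val_plus val_seq /odot val_plus !val_test baseT_cmap /=.
  by rewrite mulr1 !mul0r !addr0 mulr0 addr0 mulrDl.
- by move=> e f r s c a Hc; rewrite !val_plus addrC.
- move=> e f g r s t u c a Hc; rewrite !val_plus.
  by rewrite mul1r mulrDr !mulrA addrA.
- move=> e f r s u c a Hc; rewrite !val_plus val_seq /odot val_plus !val_test baseT_cmap /=.
  by rewrite mulr1 !mul0r !addr0 mulr0 addr0 !mulrA.
- move=> e f g b c0 r s H IH c a Hc.
  rewrite !val_seq !val_test !baseT_cmap /=.
  case Hc0: (beval c0 a); last by rewrite !mul0r.
  rewrite !mul1r !addr0 val_if.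
  case Hb: (beval b a); last by rewrite val_loop Hb val_test.
  have HA : Eterm e a = r * Eterm f a + s.
    by have := IH CA a I; rewrite val_if Hc0 val_plus val_test /= mulr1.
  set d := cmap c (fun x => ESeq x (ELoop e b)).
  have Hd : satc d by apply: satc_cmap => // x y h; apply: eq_seq h (Defs.eq_refl _ _).
  have HD : val d e a = r * val d f a.
    by rewrite (IH d a Hd) val_if Hc0 val_plus val_test baseT_cmap /= mulr0 addr0.
  rewrite val_loop Hb -/d HD /odot val_seq val_plus !val_test !baseT_cmap /=.
  rewrite val_seq val_loop Hb -/d HD HA mulr1 !mul0r !addr0 mulr0 addr0.
  exact: L2alg.
- move=> e f g b H IH He c a Hc.
  have Hconc := rule_F1 H He.
  rewrite (IH c a Hc) val_if val_seq [RHS]val_seq.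
  case Hb: (beval b a).
    rewrite He mul0r add0r /= Hb mul0r add0r val_loop Hb He star0 mul1r cmap_cmap.
    apply: cmap_ext => // x.
    exact: Defs.eq_trans (eq_seq (Defs.eq_refl _ x) Hconc) (Defs.eq_sym (ax_S2 _ _ _ _)).
  by rewrite /= Hb mul1r val_loop Hb baseT_cmap addr0.
Qed.


Fixpoint rets (e : Exp) : seq Out :=
  match e with
  | ERet v => [:: v]
  | EIf e f _ => rets e ++ rets f
  | ESeq e f => rets e ++ rets f
  | EPlus e f _ _ => rets e ++ rets f
  | ELoop e _ => rets e
  | _ => [::]
  end.

Lemma In_cat (X : Type) (x : X) (s1 s2 : seq X) :
  List.In x (s1 ++ s2) <-> List.In x s1 \/ List.In x s2.
Proof.
elim: s1 => [|y s1 IH] /=; first by split; [right | case].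
rewrite IH; tauto.
Qed.

Lemma In_map (X Z : Type) (f : X -> Z) (x : X) (s : seq X) :
  List.In x s -> List.In (f x) (map f s).
Proof. elim: s => [|y s IH] //= [->|H]; [by left | by right; apply: IH]. Qed.

Lemma rets_ok e a v : wd e a (RET v) <> 0 -> List.In v (rets e).
Proof.
elim: e => [q|b|e IHe f IHf b|e IHe f IHf|e IHe b|w|e IHe f IHf r s] /=.
- by rewrite ind_diff.
- by case: (beval b a); rewrite ind_diff.
- by move=> H; apply/In_cat; case: (beval b a) H => H; [left; apply: IHe | right; apply: IHf].
- move=> H; apply/In_cat; have [Hf|Hf] := pselect (wd f a (RET v) = 0).
    by left; apply: IHe => He; apply: H; rewrite Hf He mulr0 addr0.
  by right; apply: IHf.
- case: (beval b a) => // H; apply: IHe => He; apply: H; by rewrite He mulr0.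
- have [->|Hw] := pselect (w = v); first by left.
  by rewrite ind_diff //; congruence.
- move=> H; apply/In_cat; have [Hf|Hf] := pselect (wd f a (RET v) = 0).
    by left; apply: IHe => He; apply: H; rewrite Hf He !mulr0 addr0.
  by right; apply: IHf.
Qed.

Lemma sum_nz (X : Type) (l : seq X) (F : X -> S) :
  \sum_(t <- l) F t <> 0 -> exists t, List.In t l /\ F t <> 0.
Proof.
elim: l => [|x l IH]; first by rewrite big_nil.
rewrite big_cons => H; have [Hx|Hx] := pselect (F x = 0).
  have [t [Ht Ft]] : exists t, List.In t l /\ F t <> 0.
    by apply: IH => H0; apply: H; rewrite Hx H0 addr0.
  by exists t; split => //; right.
by exists x; split => //; left.
Qed.

Lemma sum_zero_in (X : Type) (l : seq X) (F : X -> S) :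
  (forall x, List.In x l -> F x = 0) -> \sum_(t <- l) F t = 0.
Proof.
elim: l => [|x l IH] H; rewrite ?big_nil // big_cons IH ?H ?addr0 //=; first by left.
by move=> y Hy; apply: H; right.
Qed.

Lemma sum_ext_in (X : Type) (l : seq X) (F G : X -> S) :
  (forall x, List.In x l -> F x = G x) -> \sum_(t <- l) F t = \sum_(t <- l) G t.
Proof.
elim: l => [|x l IH] H; rewrite ?big_nil // !big_cons IH ?H //=; first by left.
by move=> y Hy; apply: H; right.
Qed.

Fixpoint undupC (X : Type) (l : seq X) : seq X :=
  match l with
  | [::] => [::]
  | x :: l' => if `[< List.In x l' >] then undupC l' else x :: undupC l'
  end.

Lemma undupC_In (X : Type) (l : seq X) x : List.In x (undupC l) <-> List.In x l.
Proof.
elim: l => [|y l IH] //=; case: (asboolP (List.In y l)) => Hy /=; rewrite IH.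
  by split; [right | case=> // <-].
by [].
Qed.

Lemma undupC_NoDup (X : Type) (l : seq X) : List.NoDup (undupC l).
Proof.
elim: l => [|y l IH] /=; first by constructor.
case: (asboolP (List.In y l)) => Hy //; constructor => //.
by rewrite undupC_In.
Qed.

Lemma sum_single (X : Type) (s : seq X) (y : X) (R : Prop) (w : S) :
  List.NoDup s -> List.In y s ->
  \sum_(o <- s) (if `[< y = o /\ R >] then w else 0) = if `[< R >] then w else 0.
Proof.
have [HR|HR] := pselect R; last first.
  by move=> _ _; rewrite asboolF // sum_zero // => o; rewrite asboolF //; case.
rewrite asboolT //.
elim: s => [|o s IH] //= /List.NoDup_cons_iff [Ho Hs] Hy.
rewrite big_cons.
case: Hy => [Hoy|Hy].
  rewrite asboolT // sum_zero_in ?addr0 // => o' Ho'.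
  rewrite asboolF //; case=> Hyo' _; apply: Ho; by rewrite Hoy Hyo'.
rewrite asboolF ?add0r; first exact: IH.
by case=> Hyo _; apply: Ho; rewrite -Hyo.
Qed.

Lemma massP_MT e a p (P : Exp -> Prop) :
  massP (wd e a) (fun o => exists x', o = TR p x' /\ P x') (MT e a p P).
Proof.
set L := [:: Acc; Rej] ++ map (fun v => RET v) (rets e) ++ map (fun t => TR t.1.1 t.1.2) (trs e a).
have HinT : forall t, List.In t (trs e a) -> List.In (TR t.1.1 t.1.2) (undupC L).
  move=> t Ht; apply/undupC_In; rewrite /L /=; right; right; apply/In_cat; right.
  exact: (@In_map _ _ (fun t : (Act * Exp) * S => TR t.1.1 t.1.2) t _ Ht).
exists (undupC L); split; first exact: undupC_NoDup.
split.
  move=> o; case: o => [| |v|q g] Ho.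
  - by apply/undupC_In; left.
  - by apply/undupC_In; right; left.
  - apply/undupC_In; rewrite /L /=; right; right; apply/In_cat; left.
    exact: (@In_map _ _ (fun v : Out => RET v) v _ (rets_ok Ho)).
  - move: Ho; rewrite T1 => /sum_nz [t [Ht Ft]].
    case: (asboolP (t.1.1 = q /\ t.1.2 = g)) Ft => // [[<- <-]] _.
    exact: HinT.
symmetry.
rewrite (sum_ext _ (G := fun o => \sum_(t <- trs e a)
   (if `[< TR t.1.1 t.1.2 = o /\ (t.1.1 = p /\ P t.1.2) >] then t.2 else 0))); last first.
  case=> [| |v|q g].
  - by rewrite asboolF ?sum_zero // => [t|]; [rewrite asboolF //; case | case=> x []].
  - by rewrite asboolF ?sum_zero // => [t|]; [rewrite asboolF //; case | case=> x []].
  - by rewrite asboolF ?sum_zero // => [t|]; [rewrite asboolF //; case | case=> x []].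
  - have [[Hq Hg]|HN] := pselect (q = p /\ P g).
      rewrite asboolT; last by exists g; rewrite Hq.
      rewrite T1; apply: sum_ext => t; congr (if _ then _ else _); apply: asb_eq.
      split; first by case=> -> ->; rewrite -Hq.
      by case=> H _; split; congruence.
    rewrite asboolF; last by case=> x [[Hq' Hg'] Px]; apply: HN; split; [congruence | rewrite Hg'].
    rewrite sum_zero // => t; rewrite asboolF //; case=> [[Hq' Hg']] [Hp HP].
    by apply: HN; split; [congruence | rewrite -Hg'].
rewrite exchange_big /MT; apply: sum_ext_in => t Ht.
by apply: sum_single; [exact: undupC_NoDup | exact: HinT].
Qed.


Definition hcl (e : Exp) : Exp -> Prop := fun x => weq e x.

Lemma hcl_ker e f : hcl e = hcl f <-> weq e f.
Proof.
split.
  move=> H; have : hcl f f by exact: Defs.eq_refl.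
  by rewrite -H.
move=> H; apply: funext => x; apply: propext; split => Hx.
  exact: Defs.eq_trans (Defs.eq_sym H) Hx.
exact: Defs.eq_trans H Hx.
Qed.

Definition rep (y : Exp -> Prop) : Exp :=
  ClassicalEpsilon.epsilon (inhabits zero) (fun e => hcl e = y).

Lemma rep_ok e : weq (rep (hcl e)) e.
Proof.
apply/hcl_ker.
apply: (ClassicalEpsilon.epsilon_spec (inhabits zero) (fun x => hcl x = hcl e)).
by exists e.
Qed.

Definition gam (y : Exp -> Prop) (a : At) (o : Defs.Ev Act Out (Exp -> Prop)) : S :=
  match o with
  | Acc => Eterm (rep y) a
  | Rej => wd (rep y) a Rej
  | Ret v => wd (rep y) a (RET v)
  | Tr p y' => MT (rep y) a p (fun x => hcl x = y')
  end.

Lemma main_sec : exists (Y : Type) (gamma : Y -> At -> Defs.Ev Act Out Y -> S) (h : Exp -> Y),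
  is_automaton gamma /\ is_hom wd gamma h /\ (forall e f, h e = h f <-> weq e f).
Proof.
exists (Exp -> Prop), gam, hcl; split; [|split; last exact: hcl_ker].
- move=> y a.
  exists ([:: Acc; Rej] ++ map (fun v => @Ret Act Out (Exp -> Prop) v) (rets (rep y)) ++
          map (fun t => @Tr Act Out (Exp -> Prop) t.1.1 (hcl t.1.2)) (trs (rep y) a)).
  case=> [| |v|q y'] /= Ho.
  + by left.
  + by right; left.
  + right; right; apply/In_cat; left.
    exact: (@In_map _ _ (fun v : Out => @Ret Act Out (Exp -> Prop) v) v _ (rets_ok Ho)).
  + move: Ho; rewrite /MT => /sum_nz [t [Ht Ft]].
    case: (asboolP (t.1.1 = q /\ hcl t.1.2 = y')) Ft => // [[Hq Hy]] _.
    right; right; apply/In_cat; right; rewrite -Hq -Hy.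
    exact: (@In_map _ _ (fun t : (Act * Exp) * S => @Tr Act Out (Exp -> Prop) t.1.1 (hcl t.1.2)) t _ Ht).
- move=> x a; have Hb := sound (rep_ok x).
  split; [|split; [|split]].
  + by rewrite /= dAcc; exact: BisA a Hb.
  + exact: (Hb CR a I).
  + by move=> v; exact: (Hb (CV v) a I).
  + move=> p y /=.
    have Hs : satc (CM p (fun z => hcl z = y)).
      move=> z z' Hzz' <-; apply/hcl_ker; exact: Defs.eq_sym Hzz'.
    have -> : MT (rep (hcl x)) a p (fun z => hcl z = y) = MT x a p (fun z => hcl z = y).
      exact: (Hb (CM p (fun z => hcl z = y)) a Hs).
    exact: massP_MT.
Qed.

End Sound.

Theorem mainTheorem4 (T : finType) (Act Out : Type) (S : pzSemiRingType)
  (star : S -> S)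
  (S_positive : forall x y : S, x + y = 0 -> x = 0 /\ y = 0)
  (S_refinement : forall x y z w : S, x + y = z + w ->
     exists s t u v : S, [/\ s + t = x, s + u = z, u + v = y & t + v = w])
  (S_conway_sum : forall a b : S, star (a + b) = star a * star (b * star a))
  (S_conway_prod : forall a b : S, star (a * b) = 1 + a * star (b * a) * b) :
  exists (Y : Type) (gamma : Y -> At T -> Ev Act Out Y -> S)
         (h : Exp T Act Out S -> Y),
    is_automaton gamma /\
    is_hom (@wderiv T Act Out S star) gamma h /\
    (forall e f : Exp T Act Out S, h e = h f <-> @wequiv T Act Out S star e f).
Proof.
exact: (@main_sec T Act Out S star S_conway_sum S_conway_prod).
Qed.
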